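(* Fix $\alpha>2$, $\beta>0$, $d>0$ and an integer $D\ge0$, and let $c_1:=\frac{2\pi^2}{\alpha}\csc\!\left(\frac{2\pi}{\alpha}\right)$. For $\lambda>0$ and positive integers $N$ define $$q_\lambda(N):=1-\exp\!\Big(-c_1\lambda\big(\tfrac{d}{N}\big)^2\beta^{2/\alpha}\Big),\qquad g_\lambda(N):=\frac{\Big(1-q_\lambda(N)^{\lfloor D/N\rfloor+1}\Big)^N}{D+N}.$$ Then there exists $\lambda_0>0$ such that for every $\lambda\in(0,\lambda_0)$, $N=1$ is the unique maximizer of $g_\lambda(N)$ over all positive integers $N$.
   Context: $g_\lambda(N)$ is (up to the constant factor $\lambda R$) the lower bound on the transmission capacity of an $N$-hop ad hoc network with equidistant hops of length $d/N$, ALOHA access probability $p=1$, active transmitter density $\lambda$, SIR threshold $\beta$, path-loss exponent $\alpha$, end-to-end retransmission budget $D$ split as $\lfloor D/N\rfloor$ per hop, and the end-to-end delay bounded by $D+N$; $q_\lambda(N)$ is the per-hop single-slot outage probability. *)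

(* Defs.v *)
From Stdlib Require Import Reals Lra Lia.
Open Scope R_scope.

Definition c1 (alpha : R) : R :=
  (2 * PI ^ 2 / alpha) * / sin (2 * PI / alpha).

Definition q_out (alpha beta d lambda : R) (N : nat) : R :=
  1 - exp (- (c1 alpha * lambda * (d / INR N) ^ 2 * Rpower beta (2 / alpha))).

Definition g_tc (alpha beta d lambda : R) (D N : nat) : R :=
  (1 - q_out alpha beta d lambda N ^ (Nat.div D N + 1)) ^ N / (INR D + INR N).

(* Main.v *)
From Stdlib Require Import Reals Lra Lia.
Require Import Defs.
Open Scope R_scope.

Lemma c1_pos (alpha : R) : 2 < alpha -> 0 < c1 alpha.
Proof.
  intros Ha. unfold c1.
  assert (Hp := PI_RGT_0).
  assert (0 < sin (2 * PI / alpha)).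
  { apply sin_gt_0.
    - apply Rdiv_lt_0_compat; lra.
    - apply (Rmult_lt_reg_r alpha); [lra|].
      unfold Rdiv. rewrite Rmult_assoc, Rinv_l by lra. nra. }
  apply Rmult_lt_0_compat.
  - apply Rdiv_lt_0_compat; [|lra]. assert (0 < PI^2) by (apply pow_lt; lra). lra.
  - apply Rinv_0_lt_compat; lra.
Qed.

Lemma pow_le1 (y : R) (k : nat) : 0 <= y <= 1 -> y ^ k <= 1.
Proof. intros. rewrite <- (pow1 k). apply pow_incr; lra. Qed.

Lemma qbounds (x : R) (k : nat) : 0 <= x ->
  0 <= (1 - exp (- x)) ^ k <= 1.
Proof.
  intros Hx. assert (exp (-x) <= 1).
  { rewrite <- exp_0. destruct (Req_dec x 0). subst; rewrite Ropp_0; lra.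
    left; apply exp_increasing; lra. }
  assert (0 < exp (-x)) by apply exp_pos.
  split. apply pow_le; lra.
  apply pow_le1; lra.
Qed.

Theorem proposition7 (alpha beta d : R) (D : nat) :
  2 < alpha -> 0 < beta -> 0 < d ->
  exists lambda0 : R, 0 < lambda0 /\
    forall lambda : R, 0 < lambda < lambda0 ->
      forall N : nat, (1 < N)%nat ->
        g_tc alpha beta d lambda D N < g_tc alpha beta d lambda D 1.
Proof.
  intros Ha Hb Hd.
  set (B := Rpower beta (2 / alpha)).
  assert (HB : 0 < B) by (unfold B, Rpower; apply exp_pos).
  assert (Hc := c1_pos alpha Ha).
  set (K := c1 alpha * d ^ 2 * B).
  assert (HK : 0 < K).
  { unfold K. apply Rmult_lt_0_compat; [|lra]. apply Rmult_lt_0_compat; [lra|]. apply pow_lt; lra. }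
  assert (HD : 0 <= INR D) by apply pos_INR.
  exists (/ ((INR D + 2) * K)). split.
  { apply Rinv_0_lt_compat. apply Rmult_lt_0_compat; lra. }
  intros lambda [Hl1 Hl2] N HN.
  assert (HN2 : 2 <= INR N).
  { replace 2 with (INR 2) by (simpl; lra). apply le_INR; lia. }
  assert (Hup : g_tc alpha beta d lambda D N <= / (INR D + INR N)).
  { unfold g_tc, q_out. fold B.
    set (x := c1 alpha * lambda * (d / INR N) ^ 2 * B).
    assert (Hx : 0 <= x).
    { unfold x. apply Rmult_le_pos; [|lra]. apply Rmult_le_pos; [nra|]. apply pow2_ge_0. }
    destruct (qbounds x (Nat.div D N + 1) Hx) as [h1 h2].
    assert ((1 - (1 - exp (- x)) ^ (Nat.div D N + 1)) ^ N <= 1).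
    { apply pow_le1; lra. }
    unfold Rdiv. rewrite <- (Rmult_1_l (/ (INR D + INR N))) at 2.
    apply Rmult_le_compat_r; [|lra]. left; apply Rinv_0_lt_compat; lra. }
  assert (Hle : / (INR D + INR N) <= / (INR D + 2)).
  { apply Rinv_le_contravar; lra. }
  assert (Hlow : / (INR D + 2) < g_tc alpha beta d lambda D 1).
  { unfold g_tc, q_out. fold B. rewrite Nat.div_1_r. rewrite INR_1.
    replace (c1 alpha * lambda * (d / 1) ^ 2 * B) with (lambda * K)
      by (unfold K, Rdiv; rewrite Rinv_1; ring).
    set (a := lambda * K).
    assert (Ha0 : 0 < a) by (unfold a; nra).
    assert (Ha1 : a * (INR D + 2) < 1).
    { unfold a. apply (Rmult_lt_compat_r ((INR D + 2) * K)) in Hl2; [|nra].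
      rewrite Rinv_l in Hl2 by nra. nra. }
    assert (He := exp_ineq1_le (- a)).
    set (q := 1 - exp (- a)) in *.
    assert (Hq : q <= a) by (unfold q; lra).
    destruct (qbounds a D) as [h1 h2]; [lra|]. fold q in h1, h2.
    assert (Hq0 : 0 <= q) by (unfold q; assert (exp (-a) < exp 0) by (apply exp_increasing; lra); rewrite exp_0 in *; lra).
    assert (q ^ (D + 1) <= q).
    { rewrite Nat.add_comm. simpl. nra. }
    simpl pow. rewrite Rmult_1_r.
    assert (q * (INR D + 2) < 1) by nra.
    apply (Rmult_lt_reg_r (INR D + 2)); [lra|].
    rewrite Rinv_l by lra.
    unfold Rdiv. 
    assert (Hpos : 0 < INR D + 1) by lra.
    apply (Rmult_lt_reg_r (INR D + 1)); [lra|].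
    replace ((1 - q ^ (D + 1)) * / (INR D + 1) * (INR D + 2) * (INR D + 1))
      with ((1 - q ^ (D + 1)) * (INR D + 2)) by (field; lra).
    nra. }
  lra.
Qed.
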